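(* Let $t$ be a positive integer and let $G$ be a finite graph of NLC-width at most $t$. Then the 2VC-dimension of the hypergraph of balls in $G$ is at most $6t+2$.
   Context: The hypergraph of balls in $G$ has vertex set $V(G)$ and hyperedges all $B_G(c,r)=\{v:\mathrm{dist}_G(c,v)\le r\}$ for $c\in V(G)$ and integers $r$. A set $S\subseteq V(H)$ is 2-shattered by a hypergraph $H$ if for all distinct $s_1,s_2\in S$ there is $e\in E(H)$ with $e\cap S=\{s_1,s_2\}$; the 2VC-dimension of $H$ is the maximum size of a 2-shattered set. An NLC-decomposition of $G$ is a tuple $(T,Q,\alpha,\beta,R)$ where $T$ is a rooted binary tree (each node has at most one left and at most one right child) with leaf set $V(G)$, $Q$ is a finite label set, $\alpha:V(G)\to Q$, $\beta$ assigns to each 2-element subset of $V(T)$ a map $Q\to Q$, and $R$ assigns to each node a subset of $Q\times Q$, such that: (nlc1) if $u$ is an ancestor of $v\ne u$ and $u=u_0,\dots,u_n=v$ is the path between them, then $\beta(\{u_0,u_1\})\circ\cdots\circ\beta(\{u_{n-1},u_n\})=\beta(\{u,v\})$; (nlc2) for distinct $x,y\in V(G)$ with lowest common ancestor $u$, $x$ a descendant of the left child and $y$ of the right child of $u$, $xy\in E(G)$ iff $(\beta(\{u,x\})(\alpha(x)),\beta(\{u,y\})(\alpha(y)))\in R(u)$. The NLC-width of $G$ is the minimum $|Q|$ over NLC-decompositions of $G$. *)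

(* Defs.v *)
From mathcomp Require Import all_boot all_order all_algebra.
Set Implicit Arguments. Unset Strict Implicit. Unset Printing Implicit Defensive.
Import Order.TTheory GRing.Theory Num.Theory.

(* A finite simple graph is a symmetric irreflexive relation e on a finType T.
   dist_G(c,v) <= r  iff there is a walk from c to v with at most r edges
   (dist = +infinity when no walk exists, so v is then in no ball around c).
   Radii r range over the integers (negative radii give the empty ball). *)
Definition in_ball (T : finType) (e : rel T) (c : T) (r : int) (v : T) : Prop :=
  exists p : seq T, [/\ path e c p, last c p = v & ((size p)%:Z <= r)%R].

Definition two_shattered (T : finType) (e : rel T) (S : {set T}) : Prop :=
  forall s1 s2, s1 \in S -> s2 \in S -> s1 != s2 ->
    exists (c : T) (r : int), forall v,
      (v \in S /\ in_ball e c r v) <-> (v = s1 \/ v = s2).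

Definition vc2dim_balls_le (T : finType) (e : rel T) (k : nat) : Prop :=
  forall S : {set T}, two_shattered e S -> #|S| <= k.

Fixpoint up (N : Type) (par : N -> option N) (v : N) (n : nat) : option N :=
  match n with
  | 0 => Some v
  | m.+1 => match par v with Some p => up par p m | None => None end
  end.

Definition ancestor (N : Type) (par : N -> option N) (u v : N) : Prop :=
  exists n, up par v n = Some u.

(* comp_up par beta v n = beta(u0,u1) o ... o beta(u_{n-1},u_n) where
   u_n = v and u_i = up par v (n - i)  (the path from the ancestor u0 down to v). *)
Fixpoint comp_up (N Q : Type) (par : N -> option N) (beta : N -> N -> Q -> Q)
    (v : N) (n : nat) : Q -> Q :=
  match n with
  | 0 => fun q => q
  | m.+1 => match par v with
            | Some p => fun q => comp_up par beta p m (beta p v q)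
            | None => fun q => q
            end
  end.

(* The tree has node set N, parent map par, and side a = false/true meaning that
   a is the left/right child of its parent.  leaf identifies V(G) with the leaf set.
   beta is indexed by (ordered) pairs but required symmetric, i.e. it is a function
   of the 2-element subset {u,v}. *)
Definition is_nlc_decomposition (V : finType) (e : rel V) (N Q : finType)
    (par : N -> option N) (side : N -> bool) (leaf : V -> N)
    (alpha : V -> Q) (beta : N -> N -> Q -> Q) (R : N -> Q -> Q -> bool) : Prop :=
  (forall a b, par a = None -> par b = None -> a = b) /\
  (forall v, exists n r, up par v n = Some r /\ par r = None) /\
  (forall a b p, par a = Some p -> par b = Some p -> side a = side b -> a = b) /\
  injective leaf /\
  (forall n, (forall c, par c <> Some n) <-> exists x, leaf x = n) /\
  (forall u v, beta u v = beta v u) /\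
  (forall u v n, 0 < n -> up par v n = Some u -> comp_up par beta v n = beta u v) /\
  (forall (x y : V) (u lx ry : N), x != y ->
     par lx = Some u -> side lx = false ->
     par ry = Some u -> side ry = true ->
     ancestor par lx (leaf x) -> ancestor par ry (leaf y) ->
     (e x y <-> R u (beta u (leaf x) (alpha x)) (beta u (leaf y) (alpha y)))).

Definition nlc_width_le (V : finType) (e : rel V) (t : nat) : Prop :=
  exists (N Q : finType) (par : N -> option N) (side : N -> bool) (leaf : V -> N)
         (alpha : V -> Q) (beta : N -> N -> Q -> Q) (R : N -> Q -> Q -> bool),
    #|Q| <= t /\ is_nlc_decomposition e par side leaf alpha beta R.

(* Main.v *)
Require Import Defs.
From mathcomp Require Import all_boot all_order all_algebra.
From mathcomp Require Import zify.
From Stdlib Require Import ClassicalEpsilon.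
Set Implicit Arguments. Unset Strict Implicit. Unset Printing Implicit Defensive.

Definition asb (P : Prop) : bool := if excluded_middle_informative P then true else false.
Lemma asbP (P : Prop) : reflect P (asb P).
Proof. rewrite /asb; case: excluded_middle_informative => h; [left|right]; done. Qed.

Section Tree.
Variables (N : finType) (par : N -> option N).

Lemma up_add v a b : up par v (a + b) = if up par v a is Some p then up par p b else None.
Proof.
elim: a v => [|a IH] v; first by [].
rewrite addSn /=; case: (par v) => [p|] //; exact: IH.
Qed.

Lemma up_pred v n w : up par v n.+1 = Some w -> exists c, up par v n = Some c /\ par c = Some w.
Proof.
rewrite -addn1 up_add; case: (up par v n) => [c|] //=.
case E: (par c) => [q|] //= [<-]; by exists c.
Qed.

Lemma comp_up_add (Q : Type) (beta : N -> N -> Q -> Q) v a b p q :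
  up par v a = Some p -> comp_up par beta v (a + b) q = comp_up par beta p b (comp_up par beta v a q).
Proof.
elim: a v q => [|a IH] v q; first by move=> /= [->].
rewrite addSn /=. case: (par v) => [p'|] //= H. exact: IH.
Qed.

Hypothesis Hup : forall v, exists n r, up par v n = Some r /\ par r = None.

Lemma depth_uniq v n m r1 r2 : up par v n = Some r1 -> par r1 = None ->
  up par v m = Some r2 -> par r2 = None -> n = m.
Proof.
have key : forall n m r1 r2, n < m -> up par v n = Some r1 -> par r1 = None ->
    up par v m = Some r2 -> False.
  move=> n' m' r1' r2' lt h1 h2.
  have [k ->] : exists k, m' = n' + k.+1 by exists (m' - n').-1; lia.
  by rewrite up_add h1 /= h2.
move=> h1 h2 h3 h4.
case: (ltngtP n m) => [lt|lt|->] //; exfalso.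
- exact: key lt h1 h2 h3.
- exact: key lt h3 h4 h1.
Qed.

Lemma no_cycle u m : up par u m.+1 = Some u -> False.
Proof.
move=> h; have [n [r [h1 h2]]] := Hup u.
have h3 : up par u (m.+1 + n) = Some r by rewrite up_add h.
have := depth_uniq h1 h2 h3 h2. lia.
Qed.
End Tree.

Definition walk (V : finType) (e : rel V) (c v : V) (k : nat) : Prop :=
  exists p, [/\ path e c p, last c p = v & size p = k].

Lemma walk_join (V : finType) (e : rel V) (c a a' x : V) l d :
  walk e c a l -> e a a' -> walk e a' x d -> walk e c x (l + 1 + d).
Proof.
case=> p [hp hl hs] haa [q [hq hql hqs]].
exists (p ++ a' :: q); split.
- by rewrite cat_path hp hl /= haa hq.
- by rewrite last_cat /= hql.
- rewrite size_cat /= hs hqs; lia.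
Qed.

Lemma walk_ball (V : finType) (e : rel V) c (r : int) x k :
  walk e c x k -> (Posz k <= r)%R -> in_ball e c r x.
Proof. by case=> p [h1 h2 h3] hr; exists p; split; rewrite ?h3. Qed.

Lemma crossing (V : finType) (e : rel V) (P : pred V) c p : ~~ P c -> path e c p -> P (last c p) ->
  exists a a' l d, [/\ ~~ P a, P a', e a a', walk e c a l & walk e a' (last c p) d /\ l + 1 + d = size p].
Proof.
elim: p c => [|b p IH] c hc /=; first by move=> _ h; rewrite h in hc.
case/andP=> hcb hp hl.
case hb: (P b).
- exists c, b, 0, (size p); split=> //; first by exists [::].
  split; [by exists p | lia].
- have [a [a' [l [d [h1 h2 h3 h4 [h5 h6]]]]]] := IH b (negbT hb) hp hl.
  exists a, a', l.+1, d; split=> //; last by split=> //; lia.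
  case: h4 => q [hq hql hqs]. exists (b :: q); split=> //=; [by rewrite hcb hq | by rewrite hqs].
Qed.

Section Generic.
Variables (V : finType) (e : rel V) (Q : finType) (S X Y : {set V}) (P : pred V) (kap : V -> V -> Q).
Hypothesis HXS : X \subset S.
Hypothesis HXY : forall x, x \in X -> x \notin Y.
Hypothesis HXP : forall x, x \in X -> P x.
Hypothesis Hexch : forall a1 a1' a2 a2', ~~ P a1 -> P a1' -> ~~ P a2 -> P a2' ->
  e a1 a1' -> e a2 a2' -> kap a1 a1' = kap a2 a2' -> e a1 a2'.

Definition spec (c : V) (r : int) (x y : V) :=
  forall v, (v \in S /\ in_ball e c r v) <-> (v = x \/ v = y).

Definition K x q := exists y c r a a' l d,
  [/\ y \in Y, ~~ P c, spec c r x y, ~~ P a & P a'] /\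
  [/\ e a a', walk e c a l, walk e a' x d, (Posz (l + 1 + d)%N <= r)%R & kap a a' = q].

Lemma K_half x1 x2 y1 c1 r1 a1 a1' l1 d1 a2 a2' d2 :
  x2 \in X -> x1 != x2 -> y1 \in Y -> spec c1 r1 x1 y1 ->
  ~~ P a1 -> P a1' -> ~~ P a2 -> P a2' -> e a1 a1' -> e a2 a2' -> kap a1 a1' = kap a2 a2' ->
  walk e c1 a1 l1 -> walk e a2' x2 d2 -> (Posz (l1 + 1 + d1)%N <= r1)%R -> d2 <= d1 -> False.
Proof.
move=> hx2 hne hy1 hs1 ha1 ha1' ha2 ha2' he1 he2 hk hw1 hw2 hr hd.
have h12 : e a1 a2' by apply: Hexch hk.
have w := walk_join hw1 h12 hw2.
have hb : in_ball e c1 r1 x2 by apply: walk_ball w _; lia.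
have [] := (proj1 (hs1 x2)) (conj (subsetP HXS _ hx2) hb) => h.
- by rewrite h eqxx in hne.
- by move: (HXY hx2); rewrite h hy1.
Qed.

Lemma K_inj x1 x2 q : x1 \in X -> x2 \in X -> K x1 q -> K x2 q -> x1 = x2.
Proof.
move=> hx1 hx2 [y1 [c1 [r1 [a1 [a1' [l1 [d1 [[hy1 hc1 hs1 ha1 ha1'] [he1 hw1 hw1' hr1 hk1]]]]]]]]]
  [y2 [c2 [r2 [a2 [a2' [l2 [d2 [[hy2 hc2 hs2 ha2 ha2'] [he2 hw2 hw2' hr2 hk2]]]]]]]]].
case: (eqVneq x1 x2) => // hne; exfalso.
case: (leqP d2 d1) => hd.
- apply: (K_half hx2 hne hy1 hs1 ha1 ha1' ha2 ha2' he1 he2 _ hw1 hw2' hr1 hd).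
  by rewrite hk1 hk2.
- have hne' : x2 != x1 by rewrite eq_sym.
  apply: (K_half hx1 hne' hy2 hs2 ha2 ha2' ha1 ha1' he2 he1 _ hw2 hw1' hr2 (ltnW hd)).
  by rewrite hk1 hk2.
Qed.

Definition capt x := asb (exists y c r, [/\ y \in Y, ~~ P c & spec c r x y]).

Lemma capt_K x : x \in X -> capt x -> exists q, K x q.
Proof.
move=> hx /asbP [y [c [r [hy hc hs]]]].
have [_ [p [hp hl hsz]]] := (proj2 (hs x)) (or_introl erefl).
have hPx : P (last c p) by rewrite hl; exact: HXP.
have [a [a' [l [d [h1 h2 h3 h4 [h5 h6]]]]]] := crossing hc hp hPx.
exists (kap a a'), y, c, r, a, a', l, d; split; split => //.
- by rewrite -hl.
- by rewrite h6.
Qed.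

Lemma card_capt (q0 : Q) : #|[set x in X | capt x]| <= #|Q|.
Proof.
pose g x := odflt q0 [pick q | asb (K x q)].
have gK : forall x, x \in X -> capt x -> K x (g x).
  move=> x hx hc; rewrite /g; case: pickP => [q /asbP //|hn].
  have [q hq] := capt_K hx hc.
  by move: (hn q); case: asbP.
rewrite -(card_in_imset (f := g)); first exact: max_card.
move=> x1 x2; rewrite !inE => /andP[h1 c1] /andP[h2 c2] hg.
apply: (K_inj h1 h2 (gK _ h1 c1)); rewrite hg; exact: gK.
Qed.
End Generic.

Section Main.
Variables (V : finType) (e : rel V) (t : nat) (N Q : finType) (par : N -> option N)
  (side : N -> bool) (leaf : V -> N) (alpha : V -> Q) (beta : N -> N -> Q -> Q)
  (R : N -> Q -> Q -> bool).
Hypothesis esymm : symmetric e.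
Hypothesis Hroot : forall a b, par a = None -> par b = None -> a = b.
Hypothesis Hup : forall v, exists n r, up par v n = Some r /\ par r = None.
Hypothesis Hbin : forall a b p, par a = Some p -> par b = Some p -> side a = side b -> a = b.
Hypothesis Hinj : injective leaf.
Hypothesis Hleaf : forall n, (forall c, par c <> Some n) <-> exists x, leaf x = n.
Hypothesis Hnlc1 : forall u v n, 0 < n -> up par v n = Some u -> comp_up par beta v n = beta u v.
Hypothesis Hnlc2 : forall (x y : V) (u lx ry : N), x != y ->
     par lx = Some u -> side lx = false ->
     par ry = Some u -> side ry = true ->
     ancestor par lx (leaf x) -> ancestor par ry (leaf y) ->
     (e x y <-> R u (beta u (leaf x) (alpha x)) (beta u (leaf y) (alpha y))).

Lemma leaf_nochild x c : par c <> Some (leaf x).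
Proof. exact: (proj2 (Hleaf (leaf x))) (ex_intro _ x erefl) c. Qed.

Lemma anc_leaf x x0 : ancestor par (leaf x0) (leaf x) -> x = x0.
Proof.
case=> [[|n] h]; first by case: h => /Hinj.
have [c [_ hc]] := up_pred h. by have := leaf_nochild hc.
Qed.

Definition ins u v := asb (ancestor par u (leaf v)).
Definition lab u v := beta u (leaf v) (alpha v).

Lemma class_lemma u (hu : forall x, leaf x <> u) v1 v2 z :
  ins u v1 -> ins u v2 -> ~~ ins u z -> lab u v1 = lab u v2 -> e v1 z -> e v2 z.
Proof.
move=> /asbP [n1 h1] /asbP [n2 h2] /asbP hz hl.
have [k [r0 [hk hr0]]] := Hup u.
pose Pn n := asb (exists w, up par u n = Some w /\ ancestor par w (leaf z)).
have exP : exists n, Pn n.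
  exists k; apply/asbP; exists r0; split=> //.
  have [k' [r' [hk' hr']]] := Hup (leaf z).
  by exists k'; rewrite hk' (Hroot hr' hr0).
case: (ex_minnP exP) => n /asbP [w [hw hwz]] hmin.
case: n hw hmin => [|m] hw hmin.
  by case: hw => hw; rewrite -hw in hwz.
have [cu [hcu hcuw]] := up_pred hw.
have hncu : ~ ancestor par cu (leaf z).
  move=> hanc; have : Pn m by apply/asbP; exists cu.
  by move/hmin; rewrite ltnn.
case: hwz => [[|i] hi].
  by case: hi => hi; rewrite -hi in hcuw; have := leaf_nochild hcuw.
have [cz [hcz hczw]] := up_pred hi.
have hside : side cu != side cz.
  apply/negP => /eqP hs; have := Hbin hcuw hczw hs => eq.
  by apply: hncu; exists i; rewrite hcz eq.
have labw : forall v n1, up par (leaf v) n1 = Some u ->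
    ancestor par cu (leaf v) /\ beta w (leaf v) (alpha v) = beta w u (lab u v).
  move=> v [|n1'] h.
    by case: h => h; have := hu v.
  split; first by exists (n1'.+1 + m); rewrite up_add h.
  have h' : up par (leaf v) (n1'.+1 + m.+1) = Some w by rewrite up_add h.
  have E := comp_up_add beta m.+1 (alpha v) h.
  have p1 : 0 < n1'.+1 + m.+1 by lia.
  by rewrite (Hnlc1 p1 h') (Hnlc1 (ltn0Sn _) hw) (Hnlc1 (ltn0Sn _) h) in E.
have [ac1 lw1] := labw _ _ h1.
have [ac2 lw2] := labw _ _ h2.
have hzc : ancestor par cz (leaf z) by exists i.
have ne1 : v1 != z by apply/eqP => eq; apply: hz; rewrite -eq; exists n1.
have ne2 : v2 != z by apply/eqP => eq; apply: hz; rewrite -eq; exists n2.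
case hs: (side cu); move: hside; rewrite hs => /eqP hs'.
- have hs2 : side cz = false by case: (side cz) hs'.
  rewrite eq_sym in ne1. have H1' := Hnlc2 ne1 hczw hs2 hcuw hs hzc ac1.
  rewrite eq_sym in ne2. have H2' := Hnlc2 ne2 hczw hs2 hcuw hs hzc ac2.
  rewrite esymm => /H1'; rewrite lw1 hl -lw2 => /H2'; by rewrite esymm.
- have hs2 : side cz = true by case: (side cz) hs'.
  have H1' := Hnlc2 ne1 hcuw hs hczw hs2 ac1 hzc.
  have H2' := Hnlc2 ne2 hcuw hs hczw hs2 ac2 hzc.
  move=> /H1'; rewrite lw1 hl -lw2 => /H2'. done.
Qed.

Definition In (S : {set V}) u := [set x in S | ins u x].
Lemma inInE S u x : (x \in In S u) = (x \in S) && ins u x.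
Proof. by rewrite inE. Qed.

Lemma bound (ht : 0 < t) (hQ : #|Q| <= t) (S : {set V}) (HS : two_shattered e S) : #|S| <= 3 * t.
Proof.
apply: contraT; rewrite -ltnNge => big.
have /set0Pn [x0 hx0] : S != set0 by rewrite -card_gt0; lia.
have [k0 [r0 [hk0 hr0]]] := Hup (leaf x0).
have hanc : forall v, ancestor par r0 v.
  move=> v; have [k [r [hk hr]]] := Hup v; exists k; by rewrite hk (Hroot hr hr0).
pose D u := [set v | asb (ancestor par u v)].
have exP : exists n, [exists u, (t < #|In S u|) && (#|D u| == n)].
  exists #|D r0|; apply/existsP; exists r0; rewrite eqxx andbT.
  have -> : In S r0 = S.
    apply/setP => x; rewrite inInE; case: (x \in S) => //=; by apply/asbP.
  lia.
case: (ex_minnP exP) => n /existsP [u /andP [hu /eqP hDu]] hmin.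
have hchild : forall c, par c = Some u -> #|In S c| <= t.
  move=> c hc; rewrite leqNgt; apply/negP => hc'.
  have : n <= #|D c| by apply: hmin; apply/existsP; exists c; rewrite hc' eqxx.
  have : #|D c| < #|D u|.
    apply: proper_card; apply/properP; split.
    - apply/subsetP => v; rewrite !inE => /asbP [j hj]; apply/asbP; exists j.+1.
      by rewrite -addn1 up_add hj /= hc.
    - exists u; rewrite !inE; first by apply/asbP; exists 0.
      apply/asbP => -[j hj].
      apply: (no_cycle Hup (u := u) (m := j)). by rewrite -addn1 up_add hj /= hc.
  lia.
have hleafu : forall x, leaf x <> u.
  move=> x1 hx1.
  have : #|In S u| <= 1.
    rewrite -(cards1 x1); apply: subset_leq_card; apply/subsetP => x.
    rewrite inInE inE => /andP [_ /asbP h]. rewrite -hx1 in h. by rewrite (anc_leaf h) eqxx.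
  lia.
have hIn2 : #|In S u| <= 2 * t.
  pose LR b := [set x in In S u | asb (exists c, [/\ par c = Some u, side c = b & ancestor par c (leaf x)])].
  have cardLR : forall b, #|LR b| <= t.
    move=> b; case: (set_0Vmem (LR b)) => [-> | [x hx]]; first by rewrite cards0.
    move: hx; rewrite !inE => /andP [_ /asbP [c [hc hsc _]]].
    apply: leq_trans (hchild c hc); apply: subset_leq_card; apply/subsetP => y.
    rewrite !inE => /andP [/andP [hyS _] /asbP [c' [hc' hsc' hanc']]].
    rewrite hyS /=; apply/asbP. by rewrite (Hbin hc hc' (etrans hsc (esym hsc'))).
  have sub : In S u \subset LR false :|: LR true.
    apply/subsetP => x hx. have hx' := hx. rewrite inInE in hx'.
    case/andP: hx' => hxS /asbP [[|j] hj].
      by case: hj => hj; have := hleafu x hj.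
    have [c [hcj hc]] := up_pred hj.
    rewrite inE; apply/orP; case hs: (side c); [right|left]; rewrite inE hx /=;
      apply/asbP; exists c; split => //; by exists j.
  have := subset_leq_card sub. rewrite cardsU. have := cardLR false; have := cardLR true. lia.
have hInS : In S u \subset S by apply/subsetP => x; rewrite inInE => /andP [].
pose Out := S :\: In S u.
have hOut : t < #|Out| by rewrite /Out cardsDS //; lia.
have c1 := @card_capt V e Q S (In S u) Out (ins u) (fun a a' => lab u a')
  hInS
  (fun x hx => ltac:(by rewrite /Out inE hx))
  (fun x hx => ltac:(by move: hx; rewrite inInE => /andP []))
  (fun a1 a1' a2 a2' h1 h1' h2 h2' he1 he2 hk =>
     ltac:(rewrite esymm; apply: (class_lemma hleafu h1' h2' h1 hk); by rewrite esymm))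
  (alpha x0).
have c2 := @card_capt V e Q S Out (In S u) (fun v => ~~ ins u v) (fun a a' => lab u a)
  (subsetDl _ _)
  (fun x hx => ltac:(by move: hx; rewrite /Out inE => /andP []))
  (fun x hx => ltac:(by move: hx; rewrite /Out !inE => /andP [/negP hn hs]; apply/negP => hi; apply: hn; rewrite hs))
  (fun a1 a1' a2 a2' h1 h1' h2 h2' he1 he2 hk =>
     ltac:(apply: (class_lemma hleafu (negbNE h2) (negbNE h1) h2' (esym hk) he2)))
  (alpha x0).
have /subsetPn [x1 hx1 hnx1] : ~~ (In S u \subset [set x in In S u | capt e S Out (ins u) x]).
  apply/negP => /subset_leq_card; lia.
have /subsetPn [y1 hy1 hny1] : ~~ (Out \subset [set x in Out | capt e S (In S u) (fun v => ~~ ins u v) x]).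
  apply/negP => /subset_leq_card; lia.
rewrite inE hx1 /= in hnx1.
rewrite inE hy1 /= in hny1.
have hx1S : x1 \in S by move: hx1; rewrite inInE => /andP [].
have hy1S : y1 \in S by move: hy1; rewrite /Out inE => /andP [].
have hne : x1 != y1 by apply/eqP => eq; move: hy1; rewrite /Out inE -eq hx1.
have [c [r hspec]] := HS x1 y1 hx1S hy1S hne.
case hc: (ins u c).
- case/negP: hny1; apply/asbP; exists x1, c, r; split => //; first by rewrite hc.
  move=> v; rewrite hspec; tauto.
- case/negP: hnx1; apply/asbP; exists y1, c, r; split => //; by rewrite hc.
Qed.
End Main.

Theorem propositionA1 (t : nat) (V : finType) (e : rel V) :
  0 < t -> symmetric e -> irreflexive e -> nlc_width_le e t ->
  vc2dim_balls_le e (6 * t + 2).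
Proof.
move=> ht esymm _ [N [Q [par [side [leaf [alpha [beta [R [hQ Hd]]]]]]]]] S HS.
case: Hd => Hroot [Hup [Hbin [Hinj [Hleaf [_ [Hnlc1 Hnlc2]]]]]].
have := bound esymm Hroot Hup Hbin Hinj Hleaf Hnlc1 Hnlc2 ht hQ HS. lia.
Qed.
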